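(* Let $\mathcal{D}$ be a clocked basic action theory, $K\in\mathbb{N}$, and $\sigma_1,\sigma_2$ situations with $\sigma_1 \approx_{\mathcal{D}K} \sigma_2$. Let $\phi$ be a clocked formula uniform in $s$ whose maximal natural-number constant is $\leq K$. Then $\mathcal{D}\models\phi[\sigma_1]$ if and only if $\mathcal{D}\models\phi[\sigma_2]$.
   Context: Situation calculus setting: sorts action, situation, object and time (the real numbers); $S_0$ initial situation; $\mathit{do}(a,s)$ the successor situation; $\phi[\sigma]$ is $\phi$ with $s$ replaced by $\sigma$. Fluents are relation or function symbols with last argument a situation and other arguments objects; there are finitely many fluents, finitely many action types and a finite set $\mathcal{O}$ of object constants (with unique names and domain closure). A formula is uniform in $s$ if it mentions no situation term other than $s$ and does not mention $\mathit{Poss}$. A basic action theory (BAT) is $\mathcal{D} = \mathcal{D}_0 \cup \mathcal{D}_{poss} \cup \mathcal{D}_{ssa} \cup \mathcal{D}_{ca} \cup \mathcal{D}_{co} \cup \Sigma$: initial description (uniform in $S_0$, complete information), precondition axioms, successor state axioms, domain closure and unique name axioms for actions and objects, and foundational axioms. A clock comparison is a formula $f(\vec x,s)\bowtie v$ or $v\bowtie v'$ with $f$ a functional fluent, $v,v'\in\mathbb{N}$, $\bowtie\in\{<,\leq,=,\geq,>\}$. A formula is clocked if every atomic subformula mentioning a term of sort time is a clock comparison; time-independent if it mentions no term of sort time. A BAT is clocked if there is a distinguished action type $\mathit{wait}(t)$ (other action types have no time argument) and: every functional fluent takes values of sort time; $\mathcal{D}_0$ sets every functional fluent to $0$ at $S_0$;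 every functional fluent $f$ has successor state axiom $f(\vec o,\mathit{do}(a,s))=y \equiv \exists t\,(a=\mathit{wait}(t)\wedge y=f(\vec o,s)+t) \vee (\neg\exists t\, a=\mathit{wait}(t)) \wedge (\phi_f(\vec o,a,s)\wedge y=0 \vee \neg\phi_f(\vec o,a,s)\wedge y=f(\vec o,s))$ with $\phi_f$ time-independent and uniform in $s$; relational fluents have successor state axioms $R(\vec o,\mathit{do}(a,s))\equiv\phi_R(\vec o,a,s)$ with $\phi_R$ clocked and uniform in $s$; precondition axioms have clocked right-hand sides uniform in $s$; $\mathit{Poss}(\mathit{wait}(t),s)\equiv\top$. Functional fluents are called clocks; $\mathcal{C}$ is the set of ground situation-suppressed clock terms; the clock valuation $\nu_\sigma:\mathcal{C}\to\mathbb{R}_{\geq0}$ is given by $\nu_\sigma(\omega)=\tau$ iff $\mathcal{D}\models\omega[\sigma]=\tau$. Regions: for $u,v\in\mathbb{R}_{\geq0}$, $u\sim_K v$ iff either $u>K$ and $v>K$, or $u,v\leq K$ with $\lfloor u\rfloor=\lfloor v\rfloor$ and $\lceil u\rceil=\lceil v\rceil$. The fractional part is $\mathrm{fract}(v)=v-\lfloor v\rfloor$ if $v\leq K$ and $0$ if $v>K$. Situations satisfy $\sigma_1\approx_{\mathcal{D}K}\sigma_2$ iff (1) for every relational fluent $R$ and ground object tuple $\vec\rho$, $\mathcal{D}\models R(\vec\rho,\sigma_1)$ iff $\mathcal{D}\models R(\vec\rho,\sigma_2)$; and (2) for every $\omega\in\mathcal{C}$, $\nu_{\sigma_1}(\omega)\sim_K\nu_{\sigma_2}(\omega)$,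 and for all $\omega,\omega'\in\mathcal{C}$, $\mathrm{fract}(\nu_{\sigma_1}(\omega))\leq\mathrm{fract}(\nu_{\sigma_1}(\omega'))$ iff $\mathrm{fract}(\nu_{\sigma_2}(\omega))\leq\mathrm{fract}(\nu_{\sigma_2}(\omega'))$. *)

(* Defs.v *)
From mathcomp Require Import all_boot.
From Stdlib Require Import Reals.

Set Implicit Arguments.
Unset Strict Implicit.
Unset Printing Implicit Defensive.

(* Signature: finitely many object constants (UNA + domain closure,   *)
(* so the object sort IS this finite type), relational fluents,        *)
(* clocks (= functional fluents, valued in time), and non-wait action  *)
(* types, each with an arity (number of object arguments).            *)
Record signature := Signature {
  Obj : finType;
  RF : finType;  r_ar : RF -> nat;
  CF : finType;  c_ar : CF -> nat;
  AT : finType;  a_ar : AT -> nat }.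

Section SitCalc.
Variable S : signature.

(* Actions (UNA + domain closure for actions): A(o1..on) or wait(t). *)
Inductive action :=
| Act (A : AT S) (args : (a_ar A).-tuple (Obj S))
| Wait (t : R).

(* Situations (foundational axioms): finite action histories,
   most recent action first. *)
Definition sit := seq action.
Definition S0 : sit := [::].
Definition do_ (a : action) (s : sit) : sit := a :: s.

(* Syntax of situation-suppressed clocked formulas, uniform in s.     *)
(* The only atoms mentioning time terms are clock comparisons.        *)
Inductive oterm := OVar (x : nat) | OConst (o : Obj S).
Inductive aterm :=
| AVar (a : nat)
| AApp (A : AT S) (args : (a_ar A).-tuple oterm).
Inductive cmp := CLt | CLe | CEq | CGe | CGt.

Inductive formula :=
| FTrue | FFalse
| FRel (r : RF S) (args : (r_ar r).-tuple oterm)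
| FClock (f : CF S) (args : (c_ar f).-tuple oterm) (c : cmp) (v : nat)
| FNat (v : nat) (c : cmp) (w : nat)
| FEqO (t1 t2 : oterm)
| FEqA (t1 t2 : aterm)
| FNot (p : formula)
| FAnd (p q : formula) | FOr (p q : formula)
| FImp (p q : formula) | FIff (p q : formula)
| FExO (x : nat) (p : formula) | FAllO (x : nat) (p : formula)
| FExA (a : nat) (p : formula) | FAllA (a : nat) (p : formula).

Fixpoint time_indep (p : formula) : bool :=
  match p with
  | FClock _ _ _ _ | FNat _ _ _ => false
  | FNot q | FExO _ q | FAllO _ q | FExA _ q | FAllA _ q => time_indep q
  | FAnd q1 q2 | FOr q1 q2 | FImp q1 q2 | FIff q1 q2 =>
      time_indep q1 && time_indep q2
  | _ => true
  end.

Fixpoint maxconst (p : formula) : nat :=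
  match p with
  | FClock _ _ _ v => v
  | FNat v _ w => maxn v w
  | FNot q | FExO _ q | FAllO _ q | FExA _ q | FAllA _ q => maxconst q
  | FAnd q1 q2 | FOr q1 q2 | FImp q1 q2 | FIff q1 q2 =>
      maxn (maxconst q1) (maxconst q2)
  | _ => 0
  end.

Definition ot_closed (xo : seq nat) (t : oterm) : bool :=
  if t is OVar x then x \in xo else true.
Definition at_closed (xo xa : seq nat) (t : aterm) : bool :=
  match t with
  | AVar a => a \in xa
  | AApp _ args => all (ot_closed xo) args
  end.
Fixpoint closed_in (xo xa : seq nat) (p : formula) : bool :=
  match p with
  | FTrue | FFalse | FNat _ _ _ => true
  | FRel _ args => all (ot_closed xo) args
  | FClock _ args _ _ => all (ot_closed xo) args
  | FEqO t1 t2 => ot_closed xo t1 && ot_closed xo t2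
  | FEqA t1 t2 => at_closed xo xa t1 && at_closed xo xa t2
  | FNot q => closed_in xo xa q
  | FAnd q1 q2 | FOr q1 q2 | FImp q1 q2 | FIff q1 q2 =>
      closed_in xo xa q1 && closed_in xo xa q2
  | FExO x q | FAllO x q => closed_in (x :: xo) xa q
  | FExA a q | FAllA a q => closed_in xo (a :: xa) q
  end.
Definition closed (p : formula) : bool := closed_in [::] [::] p.

(* Semantics.  Domains are fixed (objects = Obj S, actions = action,  *)
(* situations = sit, time = R); a structure interprets the fluents    *)
(* and Poss.                                                          *)
Record interp := Interp {
  Rint : forall r : RF S, (r_ar r).-tuple (Obj S) -> sit -> Prop;
  Fint : forall f : CF S, (c_ar f).-tuple (Obj S) -> sit -> R;
  PossI : action -> sit -> Prop }.

Definition upd (T : Type) (e : nat -> T) (x : nat) (v : T) : nat -> T :=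
  fun y => if y == x then v else e y.

Definition oeval (ov : nat -> Obj S) (t : oterm) : Obj S :=
  match t with OVar x => ov x | OConst o => o end.
Definition aeval (ov : nat -> Obj S) (av : nat -> action) (t : aterm) : action :=
  match t with
  | AVar a => av a
  | AApp A args => @Act A (map_tuple (oeval ov) args)
  end.

Definition cmpR (c : cmp) (x y : R) : Prop :=
  match c with
  | CLt => (x < y)%R | CLe => (x <= y)%R | CEq => x = y
  | CGe => (x >= y)%R | CGt => (x > y)%R
  end.

Fixpoint eval (M : interp) (ov : nat -> Obj S) (av : nat -> action) (s : sit)
  (p : formula) : Prop :=
  match p with
  | FTrue => True
  | FFalse => False
  | FRel r args => Rint M (map_tuple (oeval ov) args) s
  | FClock f args c v => cmpR c (Fint M (map_tuple (oeval ov) args) s) (INR v)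
  | FNat v c w => cmpR c (INR v) (INR w)
  | FEqO t1 t2 => oeval ov t1 = oeval ov t2
  | FEqA t1 t2 => aeval ov av t1 = aeval ov av t2
  | FNot q => ~ eval M ov av s q
  | FAnd q1 q2 => eval M ov av s q1 /\ eval M ov av s q2
  | FOr q1 q2 => eval M ov av s q1 \/ eval M ov av s q2
  | FImp q1 q2 => eval M ov av s q1 -> eval M ov av s q2
  | FIff q1 q2 => eval M ov av s q1 <-> eval M ov av s q2
  | FExO x q => exists o, eval M (upd ov x o) av s q
  | FAllO x q => forall o, eval M (upd ov x o) av s q
  | FExA a q => exists b, eval M ov (upd av a b) s q
  | FAllA a q => forall b, eval M ov (upd av a b) s q
  end.

(* Basic action theories with the clocked shape built in:             *)
(*  - D0 : set of sentences uniform in S0 (plus: clocks are 0 at S0),  *)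
(*  - ssaR r = phi_R, with object vars 0..n-1 for o and action var 0  *)
(*    for a:   R(o, do(a,s)) <-> phi_R(o,a,s),                        *)
(*  - ssaF f = phi_f (clock SSA with wait / reset / unchanged),        *)
(*  - precA A = pi_A with object vars 0..n-1: Poss(A(x),s) <-> pi_A,   *)
(*    and Poss(wait(t), s) <-> True.                                   *)
(* Axioms hold under universal closure of all variables.              *)
Record BAT := MkBAT {
  D0 : formula -> Prop;
  ssaR : RF S -> formula;
  ssaF : CF S -> formula;
  precA : AT S -> formula }.

Definition vtuple (n : nat) (ov : nat -> Obj S) : n.-tuple (Obj S) :=
  [tuple ov i | i < n].

Definition is_model (D : BAT) (M : interp) : Prop :=
  (forall p, D0 D p -> forall ov av, eval M ov av S0 p) /\
  (forall f (rho : (c_ar f).-tuple (Obj S)), Fint M rho S0 = 0%R) /\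
  (forall r ov av s,
      Rint M (vtuple (r_ar r) ov) (do_ (av 0) s) <-> eval M ov av s (ssaR D r)) /\
  (forall f ov av s,
      match av 0 with
      | Wait t =>
          Fint M (vtuple (c_ar f) ov) (do_ (av 0) s)
          = (Fint M (vtuple (c_ar f) ov) s + t)%R
      | Act _ _ =>
          (eval M ov av s (ssaF D f) ->
             Fint M (vtuple (c_ar f) ov) (do_ (av 0) s) = 0%R) /\
          (~ eval M ov av s (ssaF D f) ->
             Fint M (vtuple (c_ar f) ov) (do_ (av 0) s)
             = Fint M (vtuple (c_ar f) ov) s)
      end) /\
  (forall A ov av s,
      PossI M (@Act A (vtuple (a_ar A) ov)) s <-> eval M ov av s (precA D A)) /\
  (forall t s, PossI M (Wait t) s).

Definition entails (D : BAT) (s : sit) (p : formula) : Prop :=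
  forall M, is_model D M -> forall ov av, eval M ov av s p.

Definition complete_info (D : BAT) : Prop :=
  forall p, closed p -> entails D S0 p \/ entails D S0 (FNot p).

(* clocked BAT: (shape built in above) + phi_f time-independent;
   a BAT's D0 has complete information. *)
Definition clocked_BAT (D : BAT) : Prop :=
  complete_info D /\ (forall f, time_indep (ssaF D f)).

Definition clock_val (D : BAT) (s : sit) (f : CF S)
  (rho : (c_ar f).-tuple (Obj S)) (tau : R) : Prop :=
  forall M, is_model D M -> Fint M rho s = tau.

End SitCalc.

Arguments Act {S} A args.
Arguments Wait {S} t.
Arguments FRel {S} r args.
Arguments FClock {S} f args c v.
Arguments AApp {S} A args.

Definition rfloor (u : R) : R := IZR (Int_part u).
Definition rceil (u : R) : R := (- IZR (Int_part (- u)))%R.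

Definition reg_sim (K : nat) (u v : R) : Prop :=
  ((INR K < u)%R /\ (INR K < v)%R) \/
  ((u <= INR K)%R /\ (v <= INR K)%R /\ rfloor u = rfloor v /\ rceil u = rceil v).

Definition fract (K : nat) (v : R) : R :=
  if Rle_dec v (INR K) then (v - rfloor v)%R else 0%R.

Definition region_equiv (S : signature) (D : BAT S) (K : nat) (s1 s2 : sit S) : Prop :=
  (forall (r : RF S) (rho : (r_ar r).-tuple (Obj S)),
      entails D s1 (FRel r (map_tuple (@OConst S) rho)) <->
      entails D s2 (FRel r (map_tuple (@OConst S) rho))) /\
  (forall (f : CF S) (rho : (c_ar f).-tuple (Obj S)) (tau1 tau2 : R),
      clock_val D s1 rho tau1 -> clock_val D s2 rho tau2 -> reg_sim K tau1 tau2) /\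
  (forall (f f' : CF S) (rho : (c_ar f).-tuple (Obj S)) (rho' : (c_ar f').-tuple (Obj S))
          (tau1 tau1' tau2 tau2' : R),
      clock_val D s1 rho tau1 -> clock_val D s1 rho' tau1' ->
      clock_val D s2 rho tau2 -> clock_val D s2 rho' tau2' ->
      ((fract K tau1 <= fract K tau1')%R <-> (fract K tau2 <= fract K tau2')%R)).

(* Main.v *)
Require Import Defs.
From mathcomp Require Import all_boot.
From Stdlib Require Import Reals.
From Stdlib Require Import Lra Lia Classical.

Section Aux.
Variable S : signature.

Lemma vtuple_nth (o0 : Obj S) n (t : n.-tuple (Obj S)) :
  vtuple n (fun i => nth o0 t i) = t.
Proof.
apply: eq_from_tnth => i; by rewrite tnth_mktuple (tnth_nth o0).
Qed.

Lemma map_oconst (ov : nat -> Obj S) n (t : n.-tuple (Obj S)) :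
  map_tuple (oeval ov) (map_tuple (@OConst S) t) = t.
Proof.
apply: val_inj => /=; rewrite -map_comp; elim: (val t) => //= x s -> //.
Qed.

Definition agree (M M' : interp S) (s : sit S) :=
  (forall r (rho : (r_ar r).-tuple (Obj S)), Rint M rho s <-> Rint M' rho s) /\
  (forall f (rho : (c_ar f).-tuple (Obj S)), Fint M rho s = Fint M' rho s).

Lemma eval_agree M M' s : agree M M' s ->
  forall p ov av, eval M ov av s p <-> eval M' ov av s p.
Proof.
move=> [HR HF] p; elim: p => /=.
- done.
- done.
- move=> r args ov av; exact: HR.
- move=> f args c v ov av; by rewrite HF.
- done.
- done.
- done.
- move=> p IH ov av; by rewrite IH.
- move=> p IHp q IHq ov av; by rewrite IHp IHq.
- move=> p IHp q IHq ov av; by rewrite IHp IHq.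
- move=> p IHp q IHq ov av; by rewrite IHp IHq.
- move=> p IHp q IHq ov av; by rewrite IHp IHq.
- move=> x p IH ov av; split=> -[o H]; exists o; by apply/IH.
- move=> x p IH ov av; split=> H o; by apply/IH.
- move=> x p IH ov av; split=> -[o H]; exists o; by apply/IH.
- move=> x p IH ov av; split=> H o; by apply/IH.
Qed.

Lemma agree_all (D : BAT S) (o0 : Obj S) M M' :
  is_model D M -> is_model D M' -> complete_info D -> forall s, agree M M' s.
Proof.
move=> HM HM' ci s; elim: s => [|a s IH].
- split.
  + move=> r rho.
    have cl : Defs.closed (FRel r (map_tuple (@OConst S) rho)).
      rewrite /Defs.closed /=; by elim: (val rho).
    case: (ci _ cl) => H.
    * have h1 := H M HM (fun _ => o0) (fun _ => Wait 0%R).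
      have h2 := H M' HM' (fun _ => o0) (fun _ => Wait 0%R).
      rewrite /= map_oconst in h1 h2; tauto.
    * have h1 := H M HM (fun _ => o0) (fun _ => Wait 0%R).
      have h2 := H M' HM' (fun _ => o0) (fun _ => Wait 0%R).
      rewrite /= map_oconst in h1 h2; tauto.
  + move=> f rho. by rewrite (proj1 (proj2 HM)) (proj1 (proj2 HM')).
- split.
  + move=> r rho; rewrite -(vtuple_nth o0 _ rho).
    have h1 := proj1 (proj2 (proj2 HM)) r (fun i => nth o0 rho i) (fun _ => a) s.
    have h2 := proj1 (proj2 (proj2 HM')) r (fun i => nth o0 rho i) (fun _ => a) s.
    rewrite /= in h1 h2.
    rewrite h1 h2; exact: eval_agree.
  + move=> f rho; rewrite -(vtuple_nth o0 _ rho).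
    have h1 := proj1 (proj2 (proj2 (proj2 HM))) f (fun i => nth o0 rho i) (fun _ => a) s.
    have h2 := proj1 (proj2 (proj2 (proj2 HM'))) f (fun i => nth o0 rho i) (fun _ => a) s.
    case: a h1 h2 => [A args|t] /= h1 h2.
    * case: (classic (eval M (fun i => nth o0 rho i) (fun _ => Act A args) s (ssaF D f))) => E.
      -- have E' := E; rewrite (eval_agree _ _ _ IH) in E'.
         by rewrite (proj1 h1 E) (proj1 h2 E').
      -- have E' := E; rewrite (eval_agree _ _ _ IH) in E'.
         by rewrite (proj2 h1 E) (proj2 h2 E') (proj2 IH).
    * by rewrite h1 h2 (proj2 IH).
Qed.

End Aux.

Lemma lt_transfer x y z : rfloor x = rfloor y -> (x < IZR z <-> y < IZR z)%R.
Proof.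
rewrite /rfloor => E.
have key : forall u, (u < IZR z <-> IZR (Int_part u) < IZR z)%R.
  move=> u; have [h1 h2] := base_Int_part u; split => h.
  - lra.
  - have : (Int_part u < z)%Z by apply: lt_IZR.
    move=> hz. have : (IZR (Int_part u) + 1 <= IZR z)%R.
      rewrite -plus_IZR; apply: IZR_le; lia.
    lra.
by rewrite key E -key.
Qed.

Lemma le_transfer x y z : rceil x = rceil y -> (x <= IZR z <-> y <= IZR z)%R.
Proof.
rewrite /rceil => E.
have E' : rfloor (- x) = rfloor (- y) by rewrite /rfloor; lra.
have L := lt_transfer (- x) (- y) (- z) E'. rewrite opp_IZR in L.
split => h.
- apply: Rnot_lt_le => h'; have : (- y < - IZR z)%R by lra.
  move/L => ?; lra.
- apply: Rnot_lt_le => h'; have : (- x < - IZR z)%R by lra.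
  move/L => ?; lra.
Qed.

Lemma cmp_transfer K x y c v : reg_sim K x y -> (v <= K)%coq_nat ->
  (cmpR c x (INR v) <-> cmpR c y (INR v)).
Proof.
move=> H Hv; have HvK : (INR v <= INR K)%R by apply: le_INR.
case: H => [[h1 h2]|[h1 [h2 [Fl Ce]]]].
- case: c => /=; split => ?; lra.
- have Lt := lt_transfer x y (Z.of_nat v) Fl.
  have Le := le_transfer x y (Z.of_nat v) Ce.
  rewrite -INR_IZR_INZ in Lt Le.
  case: (Rlt_le_dec x (INR v)) => a.
  + have b := proj1 Lt a.
    case: c => /=; split => ?; lra.
  + have b : (INR v <= y)%R by apply: Rnot_lt_le => /Lt; lra.
    case: (Rle_lt_dec x (INR v)) => a'.
    * have b' := proj1 Le a'.
      case: c => /=; split => ?; lra.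
    * have b' : (INR v < y)%R by apply: Rnot_le_lt => /Le; lra.
      case: c => /=; split => ?; lra.
Qed.

Theorem lemma2 (S : signature) (D : BAT S) (K : nat) (s1 s2 : sit S)
  (phi : formula S) :
  clocked_BAT D ->
  region_equiv D K s1 s2 ->
  (maxconst phi <= K)%N ->
  (entails D s1 phi <-> entails D s2 phi).
Proof.
move=> [ci _] [Hr [Hc _]] Hk.
case: (classic (inhabited (Obj S))) => [[o0]|Hne]; last first.
  by split=> _ M _ ov; exfalso; apply: Hne; exact: (inhabits (ov 0)).
suff key : forall M, is_model D M -> forall ov av,
    eval M ov av s1 phi <-> eval M ov av s2 phi.
  split=> H M HM ov av; [apply/(key M HM) | apply/(key M HM)]; exact: H.
move=> M HM.
have agr : forall M', is_model D M' -> forall s, agree S M M' s.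
  move=> M' HM'; exact: (@agree_all S D o0 M M' HM HM' ci).
have HR : forall r (rho : (r_ar r).-tuple (Obj S)), Rint M rho s1 <-> Rint M rho s2.
  move=> r rho; split=> H.
  - have : entails D s1 (FRel r (map_tuple (@OConst S) rho)).
      move=> M' HM' ov av /=; rewrite map_oconst; exact/(proj1 (agr M' HM' s1)).
    move/(Hr r rho) => H2; have := H2 M HM (fun _ => o0) (fun _ => Wait 0%R).
    by rewrite /= map_oconst.
  - have : entails D s2 (FRel r (map_tuple (@OConst S) rho)).
      move=> M' HM' ov av /=; rewrite map_oconst; exact/(proj1 (agr M' HM' s2)).
    move/(Hr r rho) => H2; have := H2 M HM (fun _ => o0) (fun _ => Wait 0%R).
    by rewrite /= map_oconst.
have HC : forall f (rho : (c_ar f).-tuple (Obj S)),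
    reg_sim K (Fint M rho s1) (Fint M rho s2).
  move=> f rho; apply: (Hc f rho) => M' HM'; symmetry; exact: (proj2 (agr M' HM' _)).
elim: phi Hk => /=.
- done.
- done.
- move=> r args _ ov av; exact: HR.
- move=> f args c v Hv ov av; apply: cmp_transfer; first exact: HC. exact/leP.
- done.
- done.
- done.
- move=> p IH Hk ov av; by rewrite IH.
- move=> p IHp q IHq; rewrite geq_max => /andP [h1 h2] ov av; by rewrite IHp // IHq.
- move=> p IHp q IHq; rewrite geq_max => /andP [h1 h2] ov av; by rewrite IHp // IHq.
- move=> p IHp q IHq; rewrite geq_max => /andP [h1 h2] ov av; by rewrite IHp // IHq.
- move=> p IHp q IHq; rewrite geq_max => /andP [h1 h2] ov av; by rewrite IHp // IHq.
- move=> x p IH Hk ov av; split=> -[o H]; exists o; by apply/IH.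
- move=> x p IH Hk ov av; split=> H o; by apply/IH.
- move=> x p IH Hk ov av; split=> -[o H]; exists o; by apply/IH.
- move=> x p IH Hk ov av; split=> H o; by apply/IH.
Qed.
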